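(* Let $\mathcal{C}$ be a finite set of classes with $|\mathcal{C}| = C$, let $\mathcal{X}$ be a domain of datapoints, and let $(X, Y, \tilde{Y})$ be random variables with $(X,Y)$ distributed according to a prior $Q_{X,Y}$ on $\mathcal{X}\times\mathcal{C}$ and $\tilde{Y}$ taking values in $\mathcal{C}$. Assume: (i) (independent noise) $X$ is independent of $\tilde{Y}$ conditioning on $Y$; (ii) (informative noisy label) the $C\times C$ noise transition matrix $\mathbf{T}_{Y\rightarrow\tilde{Y}}$, with entries $\mathbf{T}_{Y\rightarrow\tilde{Y}}(y,\tilde{y}) = \Pr[\tilde{Y}=\tilde{y}\mid Y=y]$, is invertible. For a (randomized) classifier $h$ and a $\mathcal{C}$-valued random variable $Z\in\{Y,\tilde Y\}$, define $$\mathcal{L}_{\mathrm{DMI}}(Q_{h(X),Z}) := -\log\bigl(|\det(\mathbf{Q}_{h(X),Z})|\bigr),$$ where $\mathbf{Q}_{h(X),Z}$ is the $C\times C$ matrix with entries $\mathbf{Q}_{h(X),Z}(c,z) = \Pr[h(X)=c, Z=z]$. Then: 1. (legal) If there exists a ground truth classifier $h^*$ with $h^*(X)=Y$, then for every classifier $h$, $\mathcal{L}_{\mathrm{DMI}}(Q_{h^*(X),\tilde{Y}})\le \mathcal{L}_{\mathrm{DMI}}(Q_{h(X),\tilde{Y}})$, and the inequality is strict when $h(X)$ is not a permutation of $h^*(X)$, i.e. when there is no permutation $\pi:\mathcal{C}\to\mathcal{C}$ with $h(x)=\pi(h^*(x))$ for all $x\in\mathcal{X}$. 2. (noise-robust)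 For the set $\mathcal{H}$ of all possible classifiers, $$\arg\min_{h\in\mathcal{H}}\mathcal{L}_{\mathrm{DMI}}(Q_{h(X),\tilde{Y}}) = \arg\min_{h\in\mathcal{H}}\mathcal{L}_{\mathrm{DMI}}(Q_{h(X),Y}),$$ and in fact there is a constant $\alpha$ (not depending on $h$) such that for every classifier $h$, $\mathcal{L}_{\mathrm{DMI}}(Q_{h(X),\tilde{Y}}) = \mathcal{L}_{\mathrm{DMI}}(Q_{h(X),Y}) + \alpha$. 3. (information-monotone) For every two classifiers $h,h'$, if $h'(X)$ is independent of $Y$ conditioning on $h(X)$, then $\mathcal{L}_{\mathrm{DMI}}(Q_{h(X),\tilde{Y}})\le\mathcal{L}_{\mathrm{DMI}}(Q_{h'(X),\tilde{Y}})$.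
   Context: A (randomized) classifier is a map $h:\mathcal{X}\to\Delta_{\mathcal{C}}$, where $\Delta_{\mathcal{C}}$ is the set of probability distributions over $\mathcal{C}$; given $x$, $h(x)_c$ is the probability that $h$ maps $x$ to class $c$. The random variable $h(X)$ takes value $c$ with probability $h(X)_c$ given $X$, and, fixing the input $x$, the randomness of the classifier is independent of everything else (in particular of $Y$ and $\tilde{Y}$). The convention $-\log 0 = +\infty$ is used when the determinant vanishes. *)

(* Defs.v *)
From HB Require Import structures.
From mathcomp Require Import all_boot all_order all_algebra all_fingroup.
From mathcomp Require Import all_classical all_reals all_analysis.
Set Implicit Arguments. Unset Strict Implicit. Unset Printing Implicit Defensive.
Import Order.TTheory GRing.Theory Num.Theory.
Local Open Scope classical_set_scope.
Local Open Scope ring_scope.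

(* A (randomized) classifier
   h : Xd -> 'I_C -> R maps a datapoint x to a probability vector (h x c)_c
   (measurable in x so that the probabilities below are defined). *)
Definition is_classifier (R : realType) (dX : measure_display)
  (Xd : measurableType dX) (C : nat) (h : Xd -> 'I_C -> R) : Prop :=
  [/\ (forall x c, 0 <= h x c),
      (forall x, \sum_(c < C) h x c = 1) &
      (forall c, measurable_fun setT (fun x => h x c))].

(* Pr[h(X) = c, Z = z] = E[ h(X)_c 1{Z = z} ] (the classifier's randomness is
   independent of everything else given its input). *)
Definition PrhZ (R : realType) (d : measure_display) (Omega : measurableType d)
  (P : probability Omega R) (dX : measure_display) (Xd : measurableType dX)
  (C : nat) (X : Omega -> Xd) (h : Xd -> 'I_C -> R) (Z : Omega -> 'I_C)
  (c z : 'I_C) : R :=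
  fine (\int[P]_(w in [set w | Z w = z]) (h (X w) c)%:E)%E.

Definition Qmx (R : realType) (d : measure_display) (Omega : measurableType d)
  (P : probability Omega R) (dX : measure_display) (Xd : measurableType dX)
  (C : nat) (X : Omega -> Xd) (h : Xd -> 'I_C -> R) (Z : Omega -> 'I_C)
  : 'M[R]_C := \matrix_(c, z) PrhZ P X h Z c z.

Definition LDMI (R : realType) (C : nat) (M : 'M[R]_C) : \bar R :=
  if \det M == 0 then +oo%E else (- ln `|\det M|)%:E.

(* noise transition matrix T(y,yt) = Pr[Yt = yt | Y = y]
   (with the MathComp convention x / 0 = 0) *)
Definition Tmx (R : realType) (d : measure_display) (Omega : measurableType d)
  (P : probability Omega R) (C : nat) (Y Yt : Omega -> 'I_C) : 'M[R]_C :=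
  \matrix_(y, yt) (fine (P [set w | Y w = y /\ Yt w = yt]) /
                   fine (P [set w | Y w = y])).

Definition cond_indep_X_Yt (R : realType) (d : measure_display)
  (Omega : measurableType d) (P : probability Omega R) (dX : measure_display)
  (Xd : measurableType dX) (C : nat) (X : Omega -> Xd) (Y Yt : Omega -> 'I_C)
  : Prop :=
  forall (A : set Xd) (y yt : 'I_C), measurable A ->
    (P [set w | X w \in A /\ Y w = y /\ Yt w = yt] * P [set w | Y w = y] =
     P [set w | X w \in A /\ Y w = y] * P [set w | Y w = y /\ Yt w = yt])%E.

(* h'(X) independent of Y conditionally on h(X), for randomized classifiers
   h, h' whose randomness is independent given X. *)
Definition cond_indep_h'_Y (R : realType) (d : measure_display)
  (Omega : measurableType d) (P : probability Omega R) (dX : measure_display)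
  (Xd : measurableType dX) (C : nat) (X : Omega -> Xd) (Y : Omega -> 'I_C)
  (h h' : Xd -> 'I_C -> R) : Prop :=
  forall c c' y : 'I_C,
    fine (\int[P]_(w in [set w | Y w = y]) (h (X w) c * h' (X w) c')%:E)%E *
    fine (\int[P]_(w in setT) (h (X w) c)%:E)%E =
    fine (\int[P]_(w in setT) (h (X w) c * h' (X w) c')%:E)%E *
    fine (\int[P]_(w in [set w | Y w = y]) (h (X w) c)%:E)%E.

(* Main.v *)
Require Import Defs.
From HB Require Import structures.
From mathcomp Require Import all_boot all_order all_algebra all_fingroup.
From mathcomp Require Import all_classical all_reals all_analysis.
From mathcomp Require Import measurable_realfun.
Import Order.TTheory GRing.Theory Num.Theory.
Local Open Scope classical_set_scope.
Local Open Scope ring_scope.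

Section Restr.
Local Open Scope ereal_scope.
Context d (T : measurableType d) (R : realType) (mu : {measure set T -> \bar R}).

Lemma integral_mrestr (S : set T) (mS : measurable S) (g : T -> \bar R) :
  measurable_fun setT g -> (forall x, 0 <= g x) ->
  \int[mrestr mu mS]_(w in setT) g w = \int[mu]_(w in S) g w.
Proof.
move=> mg g0.
rewrite -(setUv S) ge0_integral_setU //; last 3 first.
- exact: measurableC.
- by rewrite setUv.
- by rewrite disj_set2E setICr.
rewrite (eq_measure_integral mzero (D := ~` S)); last first.
  move=> A mA AS; rewrite /mzero; change (mu (A `&` S) = 0).
  suff -> : A `&` S = set0 by rewrite measure0.
  by apply/seteqP; split => // x [/AS].
rewrite integral_measure_zero adde0.
apply: eq_measure_integral => A mA AS; change (mu (A `&` S) = mu A).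
by rewrite setIidl.
Qed.
End Restr.

Section KI.
Local Open Scope ereal_scope.
Context d (Omega : measurableType d) (R : realType) (P : {measure set Omega -> \bar R}).
Context dX (Xd : measurableType dX) (X : Omega -> Xd) (mX : measurable_fun setT X).

Lemma KI (S1 S12 : set Omega) (mS1 : measurable S1) (mS12 : measurable S12)
  (f : Xd -> R) : measurable_fun setT f -> (forall x, (0 <= f x)%R) ->
  P S1 \is a fin_num -> P S12 \is a fin_num ->
  (forall A, measurable A ->
     P (X @^-1` A `&` S12) * P S1 = P (X @^-1` A `&` S1) * P S12) ->
  \int[P]_(w in S12) (f (X w))%:E * P S1 = \int[P]_(w in S1) (f (X w))%:E * P S12.
Proof.
move=> mf f0 fin1 fin12 H.
have mEf : measurable_fun setT (fun x => (f x)%:E) by exact/measurable_EFinP.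
have mEfX : measurable_fun setT (fun w => (f (X w))%:E).
  by apply/measurable_EFinP; exact: measurableT_comp mf mX.
have p0 : (0 <= fine (P S1))%R by rewrite fine_ge0 // measure_ge0.
have q0 : (0 <= fine (P S12))%R by rewrite fine_ge0 // measure_ge0.
pose p : {nonneg R} := NngNum p0.
pose q : {nonneg R} := NngNum q0.
pose mu1 := pushforward (mrestr P mS12) X.
pose mu2 := pushforward (mrestr P mS1) X.
have E1 : \int[P]_(w in S12) (f (X w))%:E = \int[mu1]_(x in setT) (f x)%:E.
  rewrite [RHS]ge0_integral_pushforward //; last by move=> x _; rewrite lee_fin.
  by rewrite preimage_setT integral_mrestr // => w; rewrite lee_fin.
have E2 : \int[P]_(w in S1) (f (X w))%:E = \int[mu2]_(x in setT) (f x)%:E.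
  rewrite [RHS]ge0_integral_pushforward //; last by move=> x _; rewrite lee_fin.
  by rewrite preimage_setT integral_mrestr // => w; rewrite lee_fin.
rewrite E1 E2 -(fineK fin1) -(fineK fin12) muleC [RHS]muleC.
rewrite -[fine (P S1)]/(p%:num) -[fine (P S12)]/(q%:num).
rewrite -!ge0_integral_mscale //; last 2 first.
- by move=> x _; rewrite lee_fin.
- by move=> x _; rewrite lee_fin.
apply: (@eq_measure_integral _ _ _ setT) => A mA _.
rewrite /mscale /=.
change ((fine (P S1))%:E * P (X @^-1` A `&` S12) =
        (fine (P S12))%:E * P (X @^-1` A `&` S1)).
rewrite !fineK //.
by rewrite (muleC (P S1)) H // muleC.
Qed.
End KI.
Arguments KI {d Omega R} P {dX Xd X} mX {S1 S12} mS1 mS12 f.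

Lemma cls_le1 (R : realType) dX (Xd : measurableType dX) C (h : Xd -> 'I_C -> R) :
  is_classifier h -> forall x c, 0 <= h x c <= 1.
Proof.
case=> h0 h1 _ x c; rewrite h0 /= -(h1 x) (bigD1 c) //= lerDl.
by apply: sumr_ge0 => i _.
Qed.

Lemma cls_zero (R : realType) dX (Xd : measurableType dX) C (h : Xd -> 'I_C -> R) :
  is_classifier h -> forall x c0, h x c0 = 1 -> forall c, c != c0 -> h x c = 0.
Proof.
case=> h0 h1 _ x c0 e c cc0.
have := h1 x; rewrite (bigD1 c0) //= e => H.
have : \sum_(i | i != c0) h x i = 0 by apply: (addrI 1); rewrite addr0.
by move/psumr_eq0P => /(_ (fun i _ => h0 x i)); apply.
Qed.

Lemma det_bound (R : realFieldType) n (N : 'M[R]_n) : (forall i j, 0 <= N i j) ->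
  `|\det N| + \sum_(f : {ffun 'I_n -> 'I_n} | ~~ injectiveb f) \prod_i N i (f i)
  <= \prod_i \sum_j N i j.
Proof.
move=> N0.
rewrite bigA_distr_bigA [X in _ <= X](bigID (fun f : {ffun 'I_n -> 'I_n} => injectiveb f)) /= lerD2r.
rewrite [X in _ <= X](reindex_omap (val : {perm 'I_n} -> {ffun 'I_n -> 'I_n}) insub); last first.
  by move=> f fi; rewrite insubT.
rewrite /determinant.
apply: le_trans (ler_norm_sum _ _ _) _.
rewrite [X in _ <= X](eq_bigl xpredT); last first.
  by move=> s; apply/andP; split; [exact: (valP s) | rewrite valK].
apply: ler_sum => s _.
rewrite normrM normrX normrN1 expr1n mul1r ger0_norm ?prodr_ge0 //.
by rewrite le_eqVlt; apply/orP; left; apply/eqP; apply: eq_bigr => i _; rewrite -pvalE.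
Qed.

Lemma det_perm_of (R : realFieldType) n (N : 'M[R]_n) : (forall i j, 0 <= N i j) ->
  (forall i, \sum_j N i j = 1) -> 1 <= `|\det N| ->
  exists s : 'S_n, forall i j, N i j = (s i == j)%:R.
Proof.
move=> N0 rows d1.
have H := @det_bound _ _ N N0.
have P1 : \prod_i \sum_j N i j = 1 by apply: big1 => i _; exact: rows.
rewrite P1 in H.
have S0 : \sum_(f : {ffun 'I_n -> 'I_n} | ~~ injectiveb f) \prod_i N i (f i) = 0.
  apply/eqP; rewrite eq_le sumr_ge0 ?andbT; last by move=> f _; rewrite prodr_ge0.
  by rewrite -(lerD2l `|\det N|) addr0 (le_trans H d1).
have Z : forall f : {ffun 'I_n -> 'I_n}, ~~ injectiveb f -> \prod_i N i (f i) = 0.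
  by apply/psumr_eq0P => // f _; rewrite prodr_ge0.
have ex : forall i, exists j, 0 < N i j.
  move=> i; case: (boolP [exists j, 0 < N i j]) => [/existsP // | /existsPn Hn].
  have := rows i; rewrite big1; first by move/esym/eqP; rewrite oner_eq0.
  by move=> j _; apply/eqP; rewrite eq_le N0 andbT leNgt Hn.
pose g := [ffun i => xchoose (ex i)].
have gpos i : 0 < N i (g i) by rewrite ffunE; exact: (xchooseP (ex i)).
have posinj (f : {ffun 'I_n -> 'I_n}) : (forall i, 0 < N i (f i)) -> injectiveb f.
  move=> fp; apply/negPn/negP => /Z; apply/eqP; rewrite gt_eqF //.
  by apply: prodr_gt0 => i _.
have ginj : injective g by apply/injectiveP/posinj.
have uniq_pos i j : 0 < N i j -> j = g i.
  move=> Nij; apply/eqP/negPn/negP => jg.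
  pose f2 := [ffun k => if k == i then j else g k].
  have f2inj : injective f2.
    apply/injectiveP/posinj => k; rewrite ffunE; case: eqP => [->|] //.
  have [g' gK g'K] := injF_bij ginj.
  have kneq : g' j != i by apply: contraNneq jg => <-; rewrite g'K.
  have := f2inj (g' j) i; rewrite !ffunE eqxx (negbTE kneq).
  have e := g'K j; rewrite ffunE in e.
  by move=> /(_ e) /eqP; rewrite (negbTE kneq).
exists (perm ginj) => i j; rewrite permE.
have Nz k : k != g i -> N i k = 0.
  move=> kg; apply/eqP; rewrite eq_le N0 andbT leNgt; apply: contra kg => /uniq_pos ->.
  by [].
case: eqP => [<-|/eqP gj]; last by rewrite Nz // eq_sym.
have := rows i; rewrite (bigD1 (g i)) //= big1 ?addr0 // => k kg; exact: Nz.
Qed.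

Lemma LDMI_mul (R : realType) n (A B : 'M[R]_n) : \det B != 0 ->
  LDMI (A *m B) = (LDMI A + (- ln `|\det B|)%:E)%E.
Proof.
move=> dB; rewrite /LDMI det_mulmx mulf_eq0 (negbTE dB) orbF.
case: ifP => // dA.
by rewrite normrM lnM ?posrE ?normr_gt0 ?dA // opprD EFinD.
Qed.

Lemma LDMI_le (R : realType) n (A B : 'M[R]_n) :
  `|\det B| <= `|\det A| -> (LDMI A <= LDMI B)%E.
Proof.
move=> le; rewrite /LDMI; have [dB|dB] := eqVneq (\det B) 0.
  by case: ifP => _; rewrite leey.
have dA : \det A != 0.
  by rewrite -normr_gt0 (lt_le_trans _ le) // normr_gt0.
rewrite (negbTE dA) lee_fin lerN2 ler_ln // posrE normr_gt0 //.
Qed.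

Lemma LDMI_lt (R : realType) n (A B : 'M[R]_n) :
  `|\det B| < `|\det A| -> (LDMI A < LDMI B)%E.
Proof.
move=> lt; rewrite /LDMI.
have dA : \det A != 0 by rewrite -normr_gt0 (le_lt_trans _ lt).
rewrite (negbTE dA); have [dB|dB] := eqVneq (\det B) 0; first exact: ltry.
by rewrite lte_fin ltrN2 ltr_ln // posrE normr_gt0.
Qed.

Arguments cls_le1 {R dX Xd C h}.
Arguments cls_zero {R dX Xd C h}.

Lemma setXE d (Omega : measurableType d) dX (Xd : measurableType dX)
  (X : Omega -> Xd) (A : set Xd) (Q : Omega -> Prop) :
  [set w | X w \in A /\ Q w] = X @^-1` A `&` [set w | Q w].
Proof. by apply/seteqP; split => w /= [] /[!inE]. Qed.

Section Main.
Context (R : realType) (d : measure_display) (Omega : measurableType d)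
  (P : probability Omega R) (dX : measure_display) (Xd : measurableType dX)
  (C : nat) (X : Omega -> Xd) (Y Yt : Omega -> 'I_C)
  (mX : measurable_fun setT X)
  (mY : forall y, measurable [set w | Y w = y])
  (mYt : forall y, measurable [set w | Yt w = y])
  (indep_noise : cond_indep_X_Yt P X Y Yt)
  (informative : Tmx P Y Yt \in unitmx).

Lemma Pfin (S : set Omega) : measurable S -> P S \is a fin_num.
Proof.
move=> mS; rewrite ge0_fin_numE ?measure_ge0 //.
exact: le_lt_trans (probability_le1 P mS) (ltry 1).
Qed.

Lemma Pge0 (S : set Omega) : 0 <= fine (P S).
Proof. by rewrite fine_ge0 // measure_ge0. Qed.

Lemma int_fin (f : Omega -> R) (S : set Omega) : measurable S ->
  measurable_fun setT f -> (forall w, 0 <= f w <= 1) ->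
  (\int[P]_(w in S) (f w)%:E)%E \is a fin_num.
Proof.
move=> mS mf f01.
have mEf : measurable_fun S (fun w => (f w)%:E).
  by apply/measurable_EFinP; exact: measurable_funS mf.
rewrite ge0_fin_numE; last by apply: integral_ge0 => w _; rewrite lee_fin; case/andP: (f01 w).
apply: (@le_lt_trans _ _ (\int[P]_(w in S) (cst 1%E) w)%E).
  apply: ge0_le_integral => //.
  - by move=> w _; rewrite lee_fin; case/andP: (f01 w).
  - by move=> w _; rewrite lee_fin; case/andP: (f01 w).
rewrite integral_cst // mul1e.
exact: le_lt_trans (probability_le1 P mS) (ltry 1).
Qed.

Lemma fineI (f : Omega -> R) (S : set Omega) : measurable S ->
  measurable_fun setT f -> (forall w, 0 <= f w <= 1) ->
  (fine ((\int[P]_(w in S) (f w)%:E)%E))%:E = (\int[P]_(w in S) (f w)%:E)%E.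
Proof. by move=> mS mf f01; rewrite fineK // int_fin. Qed.

Lemma fine_int_le (f g : Omega -> R) (S T : set Omega) : measurable S -> measurable T ->
  measurable_fun setT f -> (forall w, 0 <= f w <= 1) ->
  measurable_fun setT g -> (forall w, 0 <= g w <= 1) ->
  (forall w, f w <= g w) -> S `<=` T ->
  fine ((\int[P]_(w in S) (f w)%:E)%E) <= fine ((\int[P]_(w in T) (g w)%:E)%E).
Proof.
move=> mS mT mf f01 mg g01 fg ST.
rewrite -lee_fin !fineI //.
apply: (@le_trans _ _ ((\int[P]_(w in S) (g w)%:E)%E)).
  apply: ge0_le_integral => //.
  - by move=> w _; rewrite lee_fin; case/andP: (f01 w).
  - by apply/measurable_EFinP; exact: measurable_funS mf.
  - by apply/measurable_EFinP; exact: measurable_funS mg.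
  - by move=> w _; rewrite lee_fin.
apply: ge0_subset_integral => //.
- by apply/measurable_EFinP; exact: measurable_funS mg.
- by move=> w _; rewrite lee_fin; case/andP: (g01 w).
Qed.

Lemma fine_int_ge0 (f : Omega -> R) (S : set Omega) :
  (forall w, 0 <= f w) -> 0 <= fine ((\int[P]_(w in S) (f w)%:E)%E).
Proof. by move=> f0; rewrite fine_ge0 // integral_ge0 // => w _; rewrite lee_fin. Qed.


Lemma mhX (h : Xd -> 'I_C -> R) c : is_classifier h ->
  measurable_fun setT (fun w => h (X w) c).
Proof. by case=> _ _ hm; exact: measurableT_comp (hm c) mX. Qed.

Lemma hX01 (h : Xd -> 'I_C -> R) c : is_classifier h ->
  forall w, 0 <= h (X w) c <= 1.
Proof. by move=> hc w; exact: cls_le1. Qed.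

Lemma PrE (h : Xd -> 'I_C -> R) (Z : Omega -> 'I_C) c z : is_classifier h ->
  measurable [set w | Z w = z] ->
  (PrhZ P X h Z c z)%:E = (\int[P]_(w in [set w | Z w = z]) (h (X w) c)%:E)%E.
Proof. by move=> hc mZ; rewrite /PrhZ fineI //; [exact: mhX | exact: hX01]. Qed.

Lemma colsum (h : Xd -> 'I_C -> R) (Z : Omega -> 'I_C) z : is_classifier h ->
  measurable [set w | Z w = z] ->
  \sum_c PrhZ P X h Z c z = fine (P [set w | Z w = z]).
Proof.
move=> hc mZ; apply: EFin_inj.
rewrite /PrhZ EFin_sum_fine; last first.
  by move=> c _; apply: int_fin => //; [exact: mhX | exact: hX01].
rewrite -ge0_integral_sum //; last 2 first.
- by move=> c; apply/measurable_EFinP; exact: (measurable_funS measurableT (subsetT _) (mhX h c hc)).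
- by move=> c w _; rewrite lee_fin; case/andP: (hX01 h c hc w).
rewrite (eq_integral (fun _ => 1%E)); last first.
  by move=> w _; rewrite sumEFin; case: hc => _ -> _.
by rewrite (integral_cst P mZ 1%E) mul1e fineK // Pfin.
Qed.



Lemma p_neq0 y : fine (P [set w | Y w = y]) != 0.
Proof.
apply/negP => /eqP p0; move: informative; rewrite unitmxE unitfE.
rewrite (expand_det_row _ y) big1 ?eqxx // => j _.
by rewrite mxE p0 invr0 mulr0 mul0r.
Qed.

Lemma QYt (h : Xd -> 'I_C -> R) : is_classifier h ->
  Qmx P X h Yt = Qmx P X h Y *m Tmx P Y Yt.
Proof.
move=> hc; apply/matrixP => c yt; rewrite !mxE.
under eq_bigr do rewrite !mxE.
apply: EFin_inj; rewrite PrE //.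
have -> : [set w | Yt w = yt] =
    \big[setU/set0]_(y <- index_enum 'I_C) [set w | Y w = y /\ Yt w = yt].
  rewrite -bigcup_seq; apply/seteqP; split => [w /= e|w [y _ [_ e]]] //.
  by exists (Y w) => //=; rewrite mem_index_enum.
rewrite ge0_integral_bigsetU //; last 5 first.
- by move=> y; exact: measurableI (mY y) (mYt yt).
- exact: index_enum_uniq.
- apply/trivIsetP => i j _ _ ij; apply/seteqP; split => // w [[e1 _] [e2 _]].
  by move: ij; rewrite -e1 -e2 eqxx.
- by apply/measurable_EFinP; exact: (measurable_funS measurableT (subsetT _) (mhX h c hc)).
- by move=> w _; rewrite lee_fin; case/andP: (hX01 h c hc w).
rewrite -sumEFin; apply: eq_bigr => y _.
have mS12 : measurable [set w | Y w = y /\ Yt w = yt] by exact: measurableI (mY y) (mYt yt).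
have H A : measurable A ->
    (P (X @^-1` A `&` [set w | Y w = y /\ Yt w = yt]) * P [set w | Y w = y] =
     P (X @^-1` A `&` [set w | Y w = y]) * P [set w | Y w = y /\ Yt w = yt])%E.
  by move=> mA; have := indep_noise A y yt mA; rewrite !setXE.
have hm : measurable_fun setT (fun x => h x c) by case: hc.
have h0 x : 0 <= h x c by case/andP: (cls_le1 hc x c).
have K := KI P mX (mY y) mS12 (fun x => h x c) hm h0 (Pfin _ (mY y)) (Pfin _ mS12) H.
have fin12 : (\int[P]_(w in [set w | Y w = y /\ Yt w = yt]) (h (X w) c)%:E)%E \is a fin_num.
  by apply: int_fin => //; [exact: mhX | exact: hX01].
have fin1 : (\int[P]_(w in [set w | Y w = y]) (h (X w) c)%:E)%E \is a fin_num.
  by apply: int_fin => //; [exact: mhX | exact: hX01].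
rewrite -(fineK fin12); congr EFin.
have K' := congr1 fine K; rewrite !fineM // ?Pfin // in K'.
by rewrite /PrhZ mulrA -K' mulfK // p_neq0.
Qed.

Definition pr := \row_y fine (P [set w | Y w = y]).
Definition Nmx (h : Xd -> 'I_C -> R) : 'M[R]_C :=
  \matrix_(y, c) (Qmx P X h Y c y / fine (P [set w | Y w = y])).

Lemma detQY (h : Xd -> 'I_C -> R) :
  \det (Qmx P X h Y) = (\prod_y fine (P [set w | Y w = y])) * \det (Nmx h).
Proof.
rewrite -det_tr.
have -> : (Qmx P X h Y)^T = diag_mx pr *m Nmx h.
  by apply/matrixP => y c; rewrite mul_diag_mx !mxE mulrC divfK // p_neq0.
by rewrite det_mulmx det_diag; under eq_bigr do rewrite mxE.
Qed.

Lemma Nmx_ge0 (h : Xd -> 'I_C -> R) : is_classifier h -> forall y c, 0 <= Nmx h y c.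
Proof.
move=> hc y c; rewrite mxE; apply: divr_ge0; last exact: Pge0.
by rewrite mxE; apply: fine_int_ge0 => w; case/andP: (hX01 h c hc w).
Qed.

Lemma Nmx_rows (h : Xd -> 'I_C -> R) : is_classifier h -> forall y, \sum_c Nmx h y c = 1.
Proof.
move=> hc y; under eq_bigr do rewrite mxE.
rewrite -mulr_suml.
under eq_bigr do rewrite mxE.
by rewrite colsum // divff // p_neq0.
Qed.


Lemma Qhs (hs : Xd -> 'I_C -> R) : is_classifier hs ->
  {ae P, forall w, hs (X w) (Y w) = 1} -> Qmx P X hs Y = diag_mx pr.
Proof.
move=> hc hae; apply/matrixP => c y; rewrite !mxE.
apply: EFin_inj; rewrite PrE //.
have mf z : measurable_fun [set w | Y w = z] (fun w => (hs (X w) c)%:E).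
  by apply/measurable_EFinP; exact: (measurable_funS measurableT (subsetT _) (mhX hs c hc)).
have [<-|ne] := eqVneq c y.
  rewrite mulr1n (ae_eq_integral (cst 1%E)) //; last first.
    by apply: filterS hae => w e /= Yw; rewrite -Yw e.
  by rewrite integral_cst // mul1e fineK // Pfin.
rewrite mulr0n (ae_eq_integral (cst 0%E)) //; last first.
  by apply: filterS hae => w e /= Yw; rewrite (cls_zero hc (X w) (Y w) e c) // Yw.
by rewrite integral0.
Qed.


Lemma perm_ae (h hs : Xd -> 'I_C -> R) (s : 'S_C) :
  is_classifier h -> is_classifier hs -> {ae P, forall w, hs (X w) (Y w) = 1} ->
  (forall y c, Nmx h y c = (s y == c)%:R) ->
  {ae P, forall w, forall c, h (X w) (s c) = hs (X w) c}.
Proof.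
move=> hc hsc hae Ns.
have key y : \forall w \ae P, Y w = y -> h (X w) (s y) = 1.
  have Qe : Qmx P X h Y (s y) y = fine (P [set w | Y w = y]).
    have := Ns y (s y); rewrite eqxx mxE => E.
    by have := congr1 (fun t => t * fine (P [set w | Y w = y])) E; rewrite /= divfK ?p_neq0 // mul1r.
  pose f w := (1 - h (X w) (s y))%:E.
  have f0 w : (0 <= f w)%E by rewrite lee_fin subr_ge0; case/andP: (hX01 h (s y) hc w).
  have mh : measurable_fun [set w | Y w = y] (fun w => (h (X w) (s y))%:E).
    by apply/measurable_EFinP; exact: (measurable_funS measurableT (subsetT _) (mhX h (s y) hc)).
  have mf : measurable_fun [set w | Y w = y] f.
    apply/measurable_EFinP; apply: (measurable_funS measurableT (subsetT _)).
    by apply: measurable_funB => //; exact: mhX.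
  have finf : (\int[P]_(w in [set w | Y w = y]) f w)%E \is a fin_num.
    apply: (int_fin (fun w => 1 - h (X w) (s y))) => //.
      by apply: measurable_funB => //; exact: mhX.
    by move=> w; rewrite subr_ge0 gerBl; case/andP: (hX01 h (s y) hc w) => -> ->.
  have I0 : (\int[P]_(w in [set w | Y w = y]) f w)%E = 0%E.
    have h0E w : (0 <= (h (X w) (s y))%:E)%E.
      by rewrite lee_fin; case/andP: (hX01 h (s y) hc w).
    have := ge0_integralD P (mY y) (fun w _ => h0E w) mh (fun w _ => f0 w) mf.
    rewrite (eq_integral (cst 1%E)); last by move=> w _; rewrite /f -EFinD addrC subrK.
    rewrite mxE in Qe.
    rewrite integral_cst // mul1e -PrE // Qe => H.
    have E : fine (P [set w | Y w = y]) =
        fine (P [set w | Y w = y]) + fine (\int[P]_(w in [set w | Y w = y]) f w)%E.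
      by apply: EFin_inj; rewrite EFinD (fineK finf) -H fineK // Pfin.
    rewrite -(fineK finf); congr EFin.
    by apply: (addrI (fine (P [set w | Y w = y]))); rewrite addr0 -E.
  have := (ae_eq_integral_abs P (mY y) mf).1.
  rewrite (eq_integral f); last by move=> w _; rewrite gee0_abs.
  move=> /(_ I0); apply: filterS => w H Yw.
  have := H Yw; rewrite /f /= => E; apply/esym/subr0_eq; exact: EFin_inj E.
apply: (filterS2 _ _ (filter_forall _ key) hae) => w Hall e c.
have h1 := Hall (Y w) erefl.
have [->|ne] := eqVneq c (Y w); first by rewrite h1 e.
rewrite (cls_zero hc (X w) _ h1) ?(cls_zero hsc (X w) _ e) //.
by rewrite (inj_eq perm_inj).
Qed.


Lemma sum_fine_int (F : 'I_C -> Omega -> R) (g : Omega -> R) (S : set Omega) :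
  measurable S -> (forall i, measurable_fun setT (F i)) ->
  (forall i w, 0 <= F i w <= 1) -> measurable_fun setT g ->
  (forall w, 0 <= g w <= 1) -> (forall w, \sum_i F i w = g w) ->
  \sum_i fine (\int[P]_(w in S) (F i w)%:E)%E = fine (\int[P]_(w in S) (g w)%:E)%E.
Proof.
move=> mS mF F01 mg g01 Fg; apply: EFin_inj.
rewrite EFin_sum_fine; last by move=> i _; apply: int_fin.
rewrite -ge0_integral_sum //; last 2 first.
- by move=> i; apply/measurable_EFinP; exact: (measurable_funS measurableT (subsetT _) (mF i)).
- by move=> i w _; rewrite lee_fin; case/andP: (F01 i w).
rewrite fineK; last exact: int_fin.
by apply: eq_integral => w _; rewrite sumEFin Fg.
Qed.

Definition Wmx (h h' : Xd -> 'I_C -> R) : 'M[R]_C :=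
  \matrix_(c', c) (fine (\int[P]_(w in setT) (h (X w) c * h' (X w) c')%:E)%E /
                   fine (\int[P]_(w in setT) (h (X w) c)%:E)%E).

Lemma mprod (h h' : Xd -> 'I_C -> R) c c' : is_classifier h -> is_classifier h' ->
  measurable_fun setT (fun w => h (X w) c * h' (X w) c').
Proof. by move=> hc hc'; apply: measurable_funM; exact: mhX. Qed.

Lemma prod01 (h h' : Xd -> 'I_C -> R) c c' : is_classifier h -> is_classifier h' ->
  forall w, 0 <= h (X w) c * h' (X w) c' <= 1.
Proof.
move=> hc hc' w; case/andP: (hX01 h c hc w) => a0 a1; case/andP: (hX01 h' c' hc' w) => b0 b1.
by rewrite mulr_ge0 //= mulr_ile1.
Qed.

Lemma QY' (h h' : Xd -> 'I_C -> R) : is_classifier h -> is_classifier h' ->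
  cond_indep_h'_Y P X Y h h' -> Qmx P X h' Y = Wmx h h' *m Qmx P X h Y.
Proof.
move=> hc hc' ind; apply/matrixP => c' y; rewrite !mxE.
under eq_bigr do rewrite !mxE.
rewrite /PrhZ -(sum_fine_int (fun c w => h (X w) c * h' (X w) c') _ _ (mY y)); last 5 first.
- by move=> c; exact: mprod.
- by move=> c; exact: prod01.
- exact: mhX.
- exact: hX01.
- by move=> w; rewrite -mulr_suml; case: hc => _ -> _; rewrite mul1r.
apply: eq_bigr => c _.
have := ind c c' y.
set K := fine _; set B := fine _; set A := fine _; set Q := fine _ => E.
have [B0|Bn0] := eqVneq B 0.
  rewrite B0 invr0 mulr0 mul0r.
  apply/eqP; rewrite eq_le; apply/andP; split; last first.
    by apply: fine_int_ge0 => w; case/andP: (prod01 h h' c c' hc hc' w).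
  rewrite -B0; apply: fine_int_le => //.
  - exact: mprod.
  - exact: prod01.
  - exact: mhX.
  - exact: hX01.
  - move=> w; case/andP: (hX01 h c hc w) => a0 a1; case/andP: (hX01 h' c' hc' w) => b0 b1.
    by rewrite ler_piMr.
by rewrite mulrAC -E mulfK.
Qed.


Lemma Wdet (h h' : Xd -> 'I_C -> R) : is_classifier h -> is_classifier h' ->
  `|\det (Wmx h h')| <= 1.
Proof.
move=> hc hc'; rewrite -det_tr.
have W0 : forall i j, 0 <= (Wmx h h')^T i j.
  move=> i j; rewrite !mxE; apply: divr_ge0.
    by apply: fine_int_ge0 => w; case/andP: (prod01 h h' i j hc hc' w).
  by apply: fine_int_ge0 => w; case/andP: (hX01 h i hc w).
have H := @det_bound _ _ _ W0.
apply: le_trans (_ : _ <= `|\det (Wmx h h')^T| + \sum_(f : {ffun 'I_C -> 'I_C} | ~~ injectiveb f) \prod_i (Wmx h h')^T i (f i)) _.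
  by rewrite lerDl sumr_ge0 // => f _; rewrite prodr_ge0.
apply: le_trans H _; apply: prodr_ile1 => c _.
under eq_bigr do rewrite !mxE.
rewrite -mulr_suml.
rewrite (sum_fine_int (fun c' w => h (X w) c * h' (X w) c') (fun w => h (X w) c)) //; last 5 first.
- by move=> c'; exact: mprod.
- by move=> c'; exact: prod01.
- exact: mhX.
- exact: hX01.
- by move=> w; rewrite -mulr_sumr; case: hc' => _ -> _; rewrite mulr1.
set B := fine _.
have B0 : 0 <= B by apply: fine_int_ge0 => w; case/andP: (hX01 h c hc w).
have [->|Bn0] := eqVneq B 0; first by rewrite mul0r lexx ler01.
by rewrite divff // lexx ler01.
Qed.


Lemma main_sec :
  (forall hs : Xd -> 'I_C -> R, is_classifier hs ->
     {ae P, forall w, hs (X w) (Y w) = 1} ->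
     forall h : Xd -> 'I_C -> R, is_classifier h ->
       (LDMI (Qmx P X hs Yt) <= LDMI (Qmx P X h Yt))%E /\
       (~ (exists pi : {perm 'I_C},
             {ae P, forall w, forall c, h (X w) (pi c) = hs (X w) c}) ->
        (LDMI (Qmx P X hs Yt) < LDMI (Qmx P X h Yt))%E)) /\
  (forall h : Xd -> 'I_C -> R, is_classifier h ->
     ((forall h' : Xd -> 'I_C -> R, is_classifier h' ->
         (LDMI (Qmx P X h Yt) <= LDMI (Qmx P X h' Yt))%E) <->
      (forall h' : Xd -> 'I_C -> R, is_classifier h' ->
         (LDMI (Qmx P X h Y) <= LDMI (Qmx P X h' Y))%E))) /\
  (exists alpha : R, forall h : Xd -> 'I_C -> R, is_classifier h ->
     LDMI (Qmx P X h Yt) = (LDMI (Qmx P X h Y) + alpha%:E)%E) /\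
  (forall h h' : Xd -> 'I_C -> R, is_classifier h -> is_classifier h' ->
     cond_indep_h'_Y P X Y h h' ->
     (LDMI (Qmx P X h Yt) <= LDMI (Qmx P X h' Yt))%E).
Proof.
have Tn0 : \det (Tmx P Y Yt) != 0 by rewrite -unitfE -unitmxE.
have alphaE h : is_classifier h ->
    LDMI (Qmx P X h Yt) = (LDMI (Qmx P X h Y) + (- ln `|\det (Tmx P Y Yt)|)%:E)%E.
  by move=> hc; rewrite QYt // LDMI_mul.
have pp : 0 < \prod_y fine (P [set w | Y w = y]).
  by apply: prodr_gt0 => y _; rewrite lt_neqAle eq_sym p_neq0 Pge0.
have Tp : 0 < `|\det (Tmx P Y Yt)| by rewrite normr_gt0.
have dQ g : is_classifier g -> `|\det (Qmx P X g Yt)| =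
    (\prod_y fine (P [set w | Y w = y])) * `|\det (Tmx P Y Yt)| * `|\det (Nmx g)|.
  move=> gc; rewrite QYt // det_mulmx detQY !normrM (ger0_norm (ltW pp)).
  by rewrite mulrAC.
split; [|split; [|split]].
- move=> hs hsc hae h hc.
  have dQhs : `|\det (Qmx P X hs Yt)| =
      (\prod_y fine (P [set w | Y w = y])) * `|\det (Tmx P Y Yt)|.
    rewrite QYt // det_mulmx Qhs // det_diag normrM.
    under eq_bigr do rewrite mxE.
    by rewrite (ger0_norm (ltW pp)).
  have Nle : `|\det (Nmx h)| <= 1.
    have H := @det_bound _ _ _ (Nmx_ge0 h hc).
    have P1 : \prod_i \sum_j Nmx h i j = 1 by apply: big1 => i _; exact: Nmx_rows.
    rewrite P1 in H; apply: le_trans H; rewrite lerDl sumr_ge0 // => f _.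
    by rewrite prodr_ge0 // => i _; exact: Nmx_ge0.
  split.
    apply: LDMI_le; rewrite dQ // dQhs ler_piMr // mulr_ge0 // ltW //.
  move=> nperm; apply: LDMI_lt; rewrite dQ // dQhs gtr_pMr ?mulr_gt0 //.
  rewrite ltNge; apply/negP => H1; apply: nperm.
  have [s Hs] := @det_perm_of _ _ (Nmx h) (Nmx_ge0 h hc) (Nmx_rows h hc) H1.
  by exists s; exact: perm_ae.
- move=> h hc; split => H h' hc'; have := H h' hc'; rewrite !alphaE // leeD2rE //.
- by exists (- ln `|\det (Tmx P Y Yt)|) => h hc; exact: alphaE.
- move=> h h' hc hc' ind; apply: LDMI_le.
  rewrite (QYt h') // (QY' h h') // -mulmxA -QYt // det_mulmx normrM ler_piMl //.
  exact: Wdet.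
Qed.

End Main.

Theorem theorem4p1 (R : realType) (d : measure_display) (Omega : measurableType d)
  (P : probability Omega R) (dX : measure_display) (Xd : measurableType dX)
  (C : nat) (X : Omega -> Xd) (Y Yt : Omega -> 'I_C)
  (mX : measurable_fun setT X)
  (mY : forall y, measurable [set w | Y w = y])
  (mYt : forall y, measurable [set w | Yt w = y])
  (indep_noise : cond_indep_X_Yt P X Y Yt)
  (informative : Tmx P Y Yt \in unitmx) :
  (* 1. legal *)
  (forall hs : Xd -> 'I_C -> R, is_classifier hs ->
     {ae P, forall w, hs (X w) (Y w) = 1} ->
     forall h : Xd -> 'I_C -> R, is_classifier h ->
       (LDMI (Qmx P X hs Yt) <= LDMI (Qmx P X h Yt))%E /\
       (~ (exists pi : {perm 'I_C},
             {ae P, forall w, forall c, h (X w) (pi c) = hs (X w) c}) ->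
        (LDMI (Qmx P X hs Yt) < LDMI (Qmx P X h Yt))%E)) /\
  (* 2. noise-robust *)
  (forall h : Xd -> 'I_C -> R, is_classifier h ->
     ((forall h' : Xd -> 'I_C -> R, is_classifier h' ->
         (LDMI (Qmx P X h Yt) <= LDMI (Qmx P X h' Yt))%E) <->
      (forall h' : Xd -> 'I_C -> R, is_classifier h' ->
         (LDMI (Qmx P X h Y) <= LDMI (Qmx P X h' Y))%E))) /\
  (exists alpha : R, forall h : Xd -> 'I_C -> R, is_classifier h ->
     LDMI (Qmx P X h Yt) = (LDMI (Qmx P X h Y) + alpha%:E)%E) /\
  (* 3. information-monotone *)
  (forall h h' : Xd -> 'I_C -> R, is_classifier h -> is_classifier h' ->
     cond_indep_h'_Y P X Y h h' ->
     (LDMI (Qmx P X h Yt) <= LDMI (Qmx P X h' Yt))%E).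
Proof. exact: main_sec. Qed.
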